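(* Assume (ER$\sharp$) for some $\sharp\in\{cy,ra\}$ and (NE), and let $H'_{\mathcal S}=-\beta_{\rm ref}^{-1}\log\rho_{+,0}$. Then for all $j\in\{1,\dots,M\}$, $t\in\mathbb R$ and all operators $\rho$ on $\mathcal H_{\mathcal S}$, $\mathcal L_j(e^{-itH'_{\mathcal S}}\rho e^{itH'_{\mathcal S}})=e^{-itH'_{\mathcal S}}\mathcal L_j(\rho)e^{itH'_{\mathcal S}}$.
   Context: Finite-dimensional $\mathcal H_{\mathcal S},\mathcal H_{\mathcal E_j}$ ($j=1..M$), self-adjoint $H_{\mathcal S},H_{\mathcal E_j}$, self-adjoint $V_j$, $\tau_j>0$, $U_j=e^{-i\tau_j(H_{\mathcal S}\otimes\mathrm{Id}+\mathrm{Id}\otimes H_{\mathcal E_j}+V_j)}$; $\beta_{\rm ref}>0$; for $\boldsymbol\zeta\in\mathbb R^M$, $\rho_{\mathcal E_j}$ Gibbs state of $H_{\mathcal E_j}$ at $\beta_{\rm ref}-\zeta_j$, $\mathcal L_j(\rho)=\mathrm{Tr}_{\mathcal H_{\mathcal E_j}}(U_j(\rho\otimes\rho_{\mathcal E_j})U_j^* )$, $\mathcal L_{cy}=\mathcal L_M\circ\cdots\circ\mathcal L_1$, $\mathcal L_{ra}=\frac1M\sum\mathcal L_j$. Primitive: for some $n$, products of $n$ Kraus operators span all operators. (ER$\sharp$): $\mathcal L_{\sharp,\boldsymbol\zeta}$ primitive for some $\boldsymbol\zeta$. (NE): there is $\zeta\mapsto\rho_{+,\zeta}$ (states on $\mathcal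 H_{\mathcal S}$) with $U_j(\rho_{+,\zeta}\otimes\rho_{\mathcal E_j,\zeta})U_j^*=\rho_{+,\zeta}\otimes\rho_{\mathcal E_j,\zeta}$ for all $j$ and $\zeta\in\mathbb R$, $\rho_{\mathcal E_j,\zeta}$ being the Gibbs state of $H_{\mathcal E_j}$ at $\beta_{\rm ref}-\zeta$ (under (ER$\sharp$) $\rho_{+,0}$ is positive definite, so $H'_{\mathcal S}$ is well defined). *)

(* Defs.v *)
From HB Require Import structures.
From mathcomp Require Import all_boot all_order all_algebra.
From mathcomp Require Import spectral.
From mathcomp Require Import boolp reals.
From mathcomp.analysis Require Import sequences exp trigo.
From mathcomp.real_closed Require Import complex mxtens.

Set Implicit Arguments.
Unset Strict Implicit.
Unset Printing Implicit Defensive.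

Import Order.TTheory GRing.Theory Num.Theory.
Local Open Scope ring_scope.
Local Open Scope complex_scope.

Section QDefs.
Context {R : realType}.
Local Notation C := (R[i]).

Definition adjmx m n (A : 'M[C]_(m, n)) : 'M[C]_(n, m) := (map_mx Num.conj A)^T.

Definition selfadj n (A : 'M[C]_n) : Prop := adjmx A = A.

Definition psd n (A : 'M[C]_n) : Prop :=
  forall v : 'cV[C]_n, 0 <= (adjmx v *m A *m v) 0 0.

Definition is_state n (A : 'M[C]_n) : Prop :=
  selfadj A /\ psd A /\ \tr A = 1.

Definition spec_dec n (A : 'M[C]_n) (p : 'M[C]_n * ('I_n -> R)) : Prop :=
  p.1 \is unitarymx /\ A = adjmx p.1 *m diag_mx (\row_i (p.2 i)%:C) *m p.1.

(** Functional calculus f(A) = U^* diag(f d) U of a self-adjoint matrix A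
    (defined via a chosen spectral decomposition; 0 if A is not self-adjoint). *)
Definition mxfun n (f : R -> C) (A : 'M[C]_n) : 'M[C]_n :=
  match pselect (exists p, spec_dec A p) with
  | left H => let p := projT1 (cid H) in
              adjmx p.1 *m diag_mx (\row_i f (p.2 i)) *m p.1
  | right _ => 0
  end.

Definition expi (x : R) : C := (cos x +i* sin x).

Definition gibbs n (b : R) (H : 'M[C]_n) : 'M[C]_n :=
  let X := mxfun (fun x => (expR (- (b * x)))%:C) H in (\tr X)^-1 *: X.

Definition ptrace2 m n (X : 'M[C]_(m * n)) : 'M[C]_m :=
  \matrix_(i, j) \sum_(k < n) X (mxtens_index (i, k)) (mxtens_index (j, k)).

Definition Uint dS dE (HS : 'M[C]_dS) (HE : 'M[C]_dE) (V : 'M[C]_(dS * dE))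
    (tau : R) : 'M[C]_(dS * dE) :=
  mxfun (fun x => expi (- (tau * x))) (HS *t 1%:M + 1%:M *t HE + V).

Definition Lrep dS dE (U : 'M[C]_(dS * dE)) (rhoE : 'M[C]_dE) (rho : 'M[C]_dS)
  : 'M[C]_dS := ptrace2 (U *m (rho *t rhoE) *m adjmx U).

Definition primitive n (L : 'M[C]_n -> 'M[C]_n) : Prop :=
  exists (Ks : seq 'M[C]_n) (k : nat),
    (forall X, L X = \sum_(K <- Ks) K *m X *m adjmx K) /\
    (forall A : 'M[C]_n, exists c : k.-tuple 'I_(size Ks) -> C,
       A = \sum_(w : k.-tuple 'I_(size Ks))
             c w *: foldr mulmx 1%:M [seq Ks`_(nat_of_ord a) | a <- w]).

Section Family.
Variables (dS M : nat) (dE : 'I_M -> nat) (HS : 'M[C]_dS)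
  (HE : forall j, 'M[C]_(dE j)) (V : forall j, 'M[C]_(dS * dE j))
  (tau : 'I_M -> R) (beta : R).

Definition Uj (j : 'I_M) : 'M[C]_(dS * dE j) := Uint HS (HE j) (V j) (tau j).

Definition rhoE (j : 'I_M) (z : R) : 'M[C]_(dE j) := gibbs (beta - z) (HE j).

Definition Lj (j : 'I_M) (z : R) (rho : 'M[C]_dS) : 'M[C]_dS :=
  Lrep (Uj j) (rhoE j z) rho.

Definition Lcy (zeta : 'I_M -> R) (rho : 'M[C]_dS) : 'M[C]_dS :=
  foldl (fun r j => Lj j (zeta j) r) rho (enum 'I_M).

Definition Lra (zeta : 'I_M -> R) (rho : 'M[C]_dS) : 'M[C]_dS :=
  (M%:R)^-1 *: \sum_(j < M) Lj j (zeta j) rho.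

End Family.

End QDefs.

(* Main.v *)
Require Import Defs.
From HB Require Import structures.
From mathcomp Require Import all_boot all_order all_algebra.
From mathcomp Require Import spectral.
From mathcomp Require Import boolp reals.
From mathcomp.analysis Require Import sequences exp trigo.
From mathcomp.real_closed Require Import complex mxtens.
Import Order.TTheory GRing.Theory Num.Theory.
Local Open Scope ring_scope.
Local Open Scope complex_scope.
Set Implicit Arguments.
Unset Strict Implicit.
Unset Printing Implicit Defensive.
Section Gen.
Variable R : realType.
Local Notation C := R[i].

Lemma adjmxE m n (A : 'M[C]_(m,n)) i j : adjmx A i j = Num.conj (A j i).
Proof. by rewrite /adjmx !mxE. Qed.

Lemma adjmxK m n (A : 'M[C]_(m,n)) : adjmx (adjmx A) = A.
Proof. by apply/matrixP=> i j; rewrite !adjmxE conjCK. Qed.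

Lemma adjmxM m n p (A : 'M[C]_(m,n)) (B : 'M[C]_(n,p)) :
  adjmx (A *m B) = adjmx B *m adjmx A.
Proof.
apply/matrixP=> i j; rewrite adjmxE !mxE rmorph_sum; apply: eq_bigr => k _.
by rewrite !adjmxE rmorphM mulrC.
Qed.

Lemma adjmxD m n (A B : 'M[C]_(m,n)) : adjmx (A + B) = adjmx A + adjmx B.
Proof. by apply/matrixP=> i j; rewrite !mxE rmorphD. Qed.

Lemma adjmx1 n : adjmx (1%:M : 'M[C]_n) = 1%:M.
Proof.
by apply/matrixP=> i j; rewrite !mxE rmorph_nat eq_sym.
Qed.

Lemma adjmx0 m n : adjmx (0 : 'M[C]_(m,n)) = 0.
Proof. by apply/matrixP=> i j; rewrite adjmxE !mxE conjC0. Qed.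

Lemma adjmxZ m n c (A : 'M[C]_(m,n)) : adjmx (c *: A) = Num.conj c *: adjmx A.
Proof. by apply/matrixP=> i j; rewrite !mxE rmorphM. Qed.

Lemma adjmx_tens m n p q (A : 'M[C]_(m,n)) (B : 'M[C]_(p,q)) :
  adjmx (A *t B) = adjmx A *t adjmx B.
Proof. by apply/matrixP=> i j; rewrite adjmxE !mxE rmorphM. Qed.

Lemma adjmx_diag n (d : 'I_n -> C) :
  adjmx (diag_mx (\row_i d i)) = diag_mx (\row_i Num.conj (d i)).
Proof.
apply/matrixP=> i j; rewrite adjmxE !mxE eq_sym.
by case: eqVneq => [->|_]; rewrite ?mulr1n ?mulr0n ?conjC0.
Qed.

Lemma diag_intertwine m n (Y : 'M[C]_(m,n)) (d1 e1 : 'I_n -> C) (d2 e2 : 'I_m -> C) :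
  (forall i j, d2 i = d1 j -> e2 i = e1 j) ->
  Y *m diag_mx (\row_j d1 j) = diag_mx (\row_i d2 i) *m Y ->
  Y *m diag_mx (\row_j e1 j) = diag_mx (\row_i e2 i) *m Y.
Proof.
move=> H /matrixP E; apply/matrixP=> i j; have := E i j.
rewrite !mul_mx_diag !mul_diag_mx !mxE => Eij.
have [->|Y0] := eqVneq (Y i j) 0; first by rewrite mulr0 mul0r.
have h : d2 i = d1 j by apply: (mulIf Y0); rewrite -Eij mulrC.
by rewrite (H i j h) mulrC.
Qed.

Definition unit2 n (P : 'M[C]_n) := adjmx P *m P = 1%:M /\ P *m adjmx P = 1%:M.

Lemma commute_fun m n (X : 'M[C]_(m,n)) (P : 'M[C]_n) (Q : 'M[C]_m) d1 e1 d2 e2 :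
  unit2 P -> unit2 Q ->
  (forall i j, d2 i = d1 j -> e2 i = e1 j) ->
  X *m (adjmx P *m diag_mx (\row_j d1 j) *m P) = (adjmx Q *m diag_mx (\row_i d2 i) *m Q) *m X ->
  X *m (adjmx P *m diag_mx (\row_j e1 j) *m P) = (adjmx Q *m diag_mx (\row_i e2 i) *m Q) *m X.
Proof.
move=> [P1 P2] [Q1 Q2] H E.
set Y := Q *m X *m adjmx P.
have EY : Y *m diag_mx (\row_j d1 j) = diag_mx (\row_i d2 i) *m Y.
  have -> : Y *m diag_mx (\row_j d1 j) = Q *m (X *m (adjmx P *m diag_mx (\row_j d1 j) *m P)) *m adjmx P.
    by rewrite /Y -!mulmxA P2 mulmx1.
  rewrite E /Y !mulmxA Q2 mul1mx; by rewrite -!mulmxA.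
have EY2 := diag_intertwine H EY.
have -> : X *m (adjmx P *m diag_mx (\row_j e1 j) *m P) = adjmx Q *m (Y *m diag_mx (\row_j e1 j)) *m P.
  by rewrite /Y !mulmxA Q1 mul1mx.
rewrite EY2 /Y !mulmxA -!mulmxA P1 mulmx1.
by rewrite !mulmxA.
Qed.

End Gen.
Section Spec.
Variable R : realType.
Local Notation C := R[i].

Lemma adjmx_tc m n (A : 'M[C]_(m,n)) : adjmx A = map_mx Num.conj (A^T).
Proof. by rewrite /adjmx map_trmx. Qed.

Lemma unitary_unit2 n (P : 'M[C]_n) : P \is unitarymx -> unit2 P.
Proof.
move=> /unitarymxP H; have H' : P *m adjmx P = 1%:M by rewrite adjmx_tc.
by split=> //; apply: mulmx1C.
Qed.

Lemma spec_dec_unit2 n (A : 'M[C]_n) p : spec_dec A p -> unit2 p.1.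
Proof. by case=> /unitary_unit2. Qed.

Lemma spec_exists n (A : 'M[C]_n) : selfadj A -> exists p, spec_dec A p.
Proof.
move=> sA.
have hA : A \is hermsymmx.
  apply/is_hermitianmxP; rewrite expr0 scale1r.
  by rewrite -adjmx_tc sA.
have := hermitian_spectral_diag_real hA => /mxOverP re.
have /orthomx_spectralP E := hermitian_normalmx hA.
move: E re; set S := spectralmx A; set sd := spectral_diag A => E re.
have uS : S \is unitarymx by exact: spectral_unitarymx.
have Ui : invmx S = adjmx S by rewrite invmx_unitary // adjmx_tc.
exists (S, fun i => complex.Re (sd 0 i)); split; [exact: uS | rewrite [in X in _ = X]/=].
have -> : diag_mx (\row_i (complex.Re (sd 0 i))%:C) = diag_mx sd.
  by congr diag_mx; apply/rowP=> i; rewrite !mxE RRe_real.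
by rewrite -Ui.
Qed.

Lemma mxfun_dec n f (A : 'M[C]_n) p : spec_dec A p ->
  mxfun f A = adjmx p.1 *m diag_mx (\row_i f (p.2 i)) *m p.1.
Proof.
move=> sp; rewrite /mxfun; case: pselect => [H|[]]; last by exists p.
case: (cid H) => q sq /=.
have uq := spec_dec_unit2 sq; have up := spec_dec_unit2 sp.
have E : 1%:M *m (adjmx q.1 *m diag_mx (\row_i (q.2 i)%:C) *m q.1)
  = (adjmx p.1 *m diag_mx (\row_i (p.2 i)%:C) *m p.1) *m 1%:M.
  by rewrite mul1mx mulmx1 -sq.2 -sp.2.
have := commute_fun (e1 := fun i => f (q.2 i)) (e2 := fun i => f (p.2 i)) uq up _ E.
rewrite mul1mx mulmx1 => -> //.
by move=> i j [->].
Qed.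

End Spec.
Section Tens.
Variable R : realType.
Local Notation C := R[i].

Lemma sum_tens m n (F : 'I_(m * n) -> C) :
  \sum_k F k = \sum_(a < m) \sum_(b < n) F (mxtens_index (a, b)).
Proof.
rewrite pair_big /= (reindex (@mxtens_index m n)) /=.
  by apply: eq_bigr => [[a b]] _.
by exists (@mxtens_unindex m n) => x _; [apply: mxtens_indexK | apply: mxtens_unindexK].
Qed.

Lemma idx_eq m n (a c : 'I_m) (b d : 'I_n) :
  (mxtens_index (a, b) == mxtens_index (c, d)) = (a == c) && (b == d).
Proof. by rewrite (inj_eq (can_inj (@mxtens_indexK m n))) xpair_eqE. Qed.

Lemma tens1 m n : (1%:M : 'M[C]_m) *t (1%:M : 'M[C]_n) = 1%:M.
Proof.
apply/matrixP=> i j.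
case: (mxtens_indexP i) => a b; case: (mxtens_indexP j) => c d.
by rewrite tensmxE !mxE idx_eq -natrM mulnb.
Qed.

Lemma tens_diag m n (x : 'I_m -> C) (y : 'I_n -> C) :
  diag_mx (\row_a x a) *t diag_mx (\row_b y b)
  = diag_mx (\row_k (x (mxtens_unindex k).1 * y (mxtens_unindex k).2)).
Proof.
apply/matrixP=> i j.
case: (mxtens_indexP i) => a b; case: (mxtens_indexP j) => c d.
rewrite tensmxE !mxE idx_eq mxtens_indexK /=.
case: (a == c); case: (b == d); by rewrite ?mulr1n ?mulr0n ?mulr0 ?mul0r.
Qed.

Lemma unit2_tens m n (P : 'M[C]_m) (Q : 'M[C]_n) :
  unit2 P -> unit2 Q -> unit2 (P *t Q).
Proof.
move=> [P1 P2] [Q1 Q2]; rewrite /unit2 adjmx_tens !tensmx_mul.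
by rewrite P1 P2 Q1 Q2 tens1.
Qed.

Lemma dec_tens m n (P : 'M[C]_m) (Q : 'M[C]_n) x y :
  (adjmx P *m diag_mx (\row_a x a) *m P) *t (adjmx Q *m diag_mx (\row_b y b) *m Q)
  = adjmx (P *t Q) *m
    diag_mx (\row_k (x (mxtens_unindex k).1 * y (mxtens_unindex k).2)) *m (P *t Q).
Proof. by rewrite -!tensmx_mul adjmx_tens tens_diag. Qed.

Lemma tens_mulE m n p q r (A : 'M[C]_(m,n)) (B : 'M[C]_(p,q)) (Z : 'M[C]_(n * q, r)) i k c :
  ((A *t B) *m Z) (mxtens_index (i,k)) c
  = \sum_(a < n) \sum_(b < q) A i a * B k b * Z (mxtens_index (a,b)) c.
Proof.
rewrite mxE sum_tens; apply: eq_bigr => a _; apply: eq_bigr => b _.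
by rewrite tensmxE.
Qed.

Lemma mul_tensE m n p q r (A : 'M[C]_(m,n)) (B : 'M[C]_(p,q)) (Z : 'M[C]_(r, m * p)) i k c :
  (Z *m (A *t B)) c (mxtens_index (i,k))
  = \sum_(a < m) \sum_(b < p) Z c (mxtens_index (a,b)) * A a i * B b k.
Proof.
rewrite mxE sum_tens; apply: eq_bigr => a _; apply: eq_bigr => b _.
by rewrite tensmxE mulrA.
Qed.

Lemma sum_delta n (k : 'I_n) (F : 'I_n -> C) :
  \sum_(b < n) (k == b)%:R * F b = F k.
Proof.
rewrite (bigD1 k) //= eqxx mul1r big1 ?addr0 // => b /negPf.
by rewrite eq_sym => ->; rewrite mul0r.
Qed.

Lemma ptrace2E m n (Z : 'M[C]_(m * n)) i j :
  ptrace2 Z i j = \sum_(k < n) Z (mxtens_index (i,k)) (mxtens_index (j,k)).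
Proof. by rewrite mxE. Qed.

Lemma ptrace_l m n (A : 'M[C]_m) (Z : 'M[C]_(m * n)) :
  ptrace2 ((A *t 1%:M) *m Z) = A *m ptrace2 Z.
Proof.
apply/matrixP=> i j; rewrite ptrace2E mxE.
under eq_bigr => k _ do rewrite tens_mulE.
under [RHS]eq_bigr => a _ do rewrite ptrace2E big_distrr /=.
rewrite exchange_big /=; apply: eq_bigr => a _; apply: eq_bigr => k _.
rewrite (eq_bigr (fun b => (k == b)%:R * (A i a * Z (mxtens_index (a, b)) (mxtens_index (j, k))))).
  by rewrite sum_delta.
by move=> b _; rewrite mxE mulrAC mulrC.
Qed.

Lemma ptrace_r m n (A : 'M[C]_m) (Z : 'M[C]_(m * n)) :
  ptrace2 (Z *m (A *t 1%:M)) = ptrace2 Z *m A.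
Proof.
apply/matrixP=> i j; rewrite ptrace2E mxE.
under eq_bigr => k _ do rewrite mul_tensE.
under [RHS]eq_bigr => a _ do rewrite ptrace2E big_distrl /=.
rewrite exchange_big /=; apply: eq_bigr => a _; apply: eq_bigr => k _.
rewrite (eq_bigr (fun b => (k == b)%:R * (Z (mxtens_index (i, k)) (mxtens_index (a, b)) * A a j))).
  by rewrite sum_delta.
by move=> b _; rewrite mxE eq_sym mulrC mulrA.
Qed.

Lemma ptrace_c m n (B : 'M[C]_n) (Z : 'M[C]_(m * n)) :
  ptrace2 ((1%:M *t B) *m Z) = ptrace2 (Z *m (1%:M *t B)).
Proof.
apply/matrixP=> i j; rewrite !ptrace2E.
under eq_bigr => k _ do rewrite tens_mulE.
under [RHS]eq_bigr => k _ do rewrite mul_tensE.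
have E1 : forall k, \sum_(a < m) \sum_(b < n) 1%:M i a * B k b * Z (mxtens_index (a, b)) (mxtens_index (j, k))
   = \sum_(b < n) B k b * Z (mxtens_index (i, b)) (mxtens_index (j, k)).
  move=> k; rewrite exchange_big /=; apply: eq_bigr => b _.
  rewrite (eq_bigr (fun a => (i == a)%:R * (B k b * Z (mxtens_index (a, b)) (mxtens_index (j, k))))).
    by rewrite sum_delta.
  by move=> a _; rewrite mxE mulrA.
have E2 : forall k, \sum_(a < m) \sum_(b < n) Z (mxtens_index (i, k)) (mxtens_index (a, b)) * 1%:M a j * B b k
   = \sum_(b < n) Z (mxtens_index (i, k)) (mxtens_index (j, b)) * B b k.
  move=> k; rewrite exchange_big /=; apply: eq_bigr => b _.
  rewrite (eq_bigr (fun a => (j == a)%:R * (Z (mxtens_index (i, k)) (mxtens_index (a, b)) * B b k))).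
    by rewrite sum_delta.
  by move=> a _; rewrite mxE eq_sym mulrAC mulrC.
rewrite (eq_bigr _ (fun k _ => E1 k)) (eq_bigr _ (fun k _ => E2 k)) /=.
rewrite exchange_big /=; apply: eq_bigr => k _; apply: eq_bigr => b _.
by rewrite mulrC.
Qed.

End Tens.
Section Conj.
Variable R : realType.
Local Notation C := R[i].

Lemma ptrace_conj m n (W : 'M[C]_m) (V : 'M[C]_n) (Y : 'M[C]_(m * n)) :
  adjmx V *m V = 1%:M ->
  ptrace2 ((W *t V) *m Y *m adjmx (W *t V)) = W *m ptrace2 Y *m adjmx W.
Proof.
move=> VV.
have -> : W *t V = (W *t 1%:M) *m (1%:M *t V) by rewrite tensmx_mul mulmx1 mul1mx.
rewrite adjmxM !adjmx_tens !adjmx1 !mulmxA ptrace_r -!mulmxA ptrace_l.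
rewrite ptrace_c -[Y *m _ *m _]mulmxA tensmx_mul mulmx1 VV tens1 mulmx1.
by rewrite mulmxA.
Qed.

Lemma diag1 n : diag_mx (\row_(i < n) (1 : C)) = 1%:M.
Proof. by apply/matrixP=> i j; rewrite !mxE. Qed.

Lemma diag_mul n (d e : 'I_n -> C) :
  diag_mx (\row_i d i) *m diag_mx (\row_i e i) = diag_mx (\row_i (d i * e i)).
Proof. by rewrite mulmx_diag; congr diag_mx; apply/rowP=> i; rewrite !mxE. Qed.

Lemma dec_mul n (Q : 'M[C]_n) d e : unit2 Q ->
  (adjmx Q *m diag_mx (\row_i d i) *m Q) *m (adjmx Q *m diag_mx (\row_i e i) *m Q)
  = adjmx Q *m diag_mx (\row_i (d i * e i)) *m Q.
Proof.
move=> [Q1 Q2].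
by rewrite -!mulmxA (mulmxA Q) Q2 mul1mx !mulmxA -(mulmxA (adjmx Q)) diag_mul.
Qed.

Lemma dec_adj n (Q : 'M[C]_n) d :
  adjmx (adjmx Q *m diag_mx (\row_i d i) *m Q)
  = adjmx Q *m diag_mx (\row_i Num.conj (d i)) *m Q.
Proof. by rewrite !adjmxM adjmxK adjmx_diag mulmxA. Qed.

Lemma unit2_dec n (Q : 'M[C]_n) d : unit2 Q ->
  (forall i, Num.conj (d i) * d i = 1) -> unit2 (adjmx Q *m diag_mx (\row_i d i) *m Q).
Proof.
move=> uQ H; rewrite /unit2 dec_adj !dec_mul //.
have -> : \row_i (Num.conj (d i) * d i) = \row_i (1 : C) by apply/rowP=> i; rewrite !mxE H.
have -> : \row_i (d i * Num.conj (d i)) = \row_i (1 : C) by apply/rowP=> i; rewrite !mxE mulrC H.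
by rewrite diag1 mulmx1 uQ.1.
Qed.

Lemma expi_conj (x : R) : Num.conj (expi x) * expi x = 1.
Proof.
by rewrite /expi /=; simpc; rewrite -!expr2 cos2Dsin2 mulrC subrr.
Qed.

Lemma expiD (x y : R) : expi x * expi y = expi (x + y).
Proof.
rewrite /expi; simpc; rewrite cosD sinD; congr (_ +i* _).
by rewrite addrC.
Qed.

Lemma expi_conj' (x : R) : expi x * Num.conj (expi x) = 1.
Proof. by rewrite mulrC expi_conj. Qed.

End Conj.
Section Gibbs.
Variable R : realType.
Local Notation C := R[i].

Lemma scale_diag n (c : C) (d : 'I_n -> C) :
  c *: diag_mx (\row_i d i) = diag_mx (\row_i (c * d i)).
Proof. by apply/matrixP=> i j; rewrite !mxE mulrnAr. Qed.

Lemma scale_dec n (c : C) (Q : 'M[C]_n) d :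
  c *: (adjmx Q *m diag_mx (\row_i d i) *m Q) = adjmx Q *m diag_mx (\row_i (c * d i)) *m Q.
Proof. by rewrite scalemxAl scalemxAr scale_diag. Qed.

Lemma tr_dec n (Q : 'M[C]_n) d : unit2 Q ->
  \tr (adjmx Q *m diag_mx (\row_i d i) *m Q) = \sum_i d i.
Proof.
move=> [Q1 Q2]; rewrite mxtrace_mulC mulmxA Q2 mul1mx mxtrace_diag.
by apply: eq_bigr => i _; rewrite mxE.
Qed.

Definition gw n (b : R) (h : 'I_n -> R) (i : 'I_n) : R :=
  expR (- (b * h i)) / \sum_k expR (- (b * h k)).

Lemma gw_pos n b (h : 'I_n -> R) i : 0 < gw b h i.
Proof.
rewrite /gw divr_gt0 ?expR_gt0 //.
rewrite (bigD1 i) //= ltr_wpDr ?expR_gt0 //.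
by apply: sumr_ge0 => k _; rewrite ltW ?expR_gt0.
Qed.

Lemma gibbs_dec n b (A : 'M[C]_n) Q h : spec_dec A (Q, h) ->
  gibbs b A = adjmx Q *m diag_mx (\row_i (gw b h i)%:C) *m Q.
Proof.
move=> sp; rewrite /gibbs (mxfun_dec _ sp) /= tr_dec ?(spec_dec_unit2 sp) //.
rewrite scale_dec; congr (_ *m diag_mx _ *m _); apply/rowP=> i; rewrite !mxE.
  by rewrite /gw -rmorph_sum -fmorphV -rmorphM mulrC.
exact: (spec_dec_unit2 sp).
Qed.

End Gibbs.
Section Prim.
Variable R : realType.
Local Notation C := R[i].

Lemma tr_BB m n (B : 'M[C]_(m, n)) :
  \tr (B *m adjmx B) = \sum_i \sum_j `|B i j| ^+ 2.
Proof.
rewrite /mxtrace; apply: eq_bigr => i _; rewrite mxE; apply: eq_bigr => j _.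
by rewrite adjmxE normCK.
Qed.

Lemma tr_BB_ge0 m n (B : 'M[C]_(m, n)) : 0 <= \tr (B *m adjmx B).
Proof. by rewrite tr_BB; apply: sumr_ge0 => i _; apply: sumr_ge0 => j _; apply: exprn_ge0. Qed.

Lemma tr_BB_eq0 m n (B : 'M[C]_(m, n)) : \tr (B *m adjmx B) = 0 -> B = 0.
Proof.
rewrite tr_BB => h; apply/matrixP=> i j.
have h1 : \sum_j `|B i j| ^+ 2 = 0.
  apply: (psumr_eq0P _ h) => // k _; apply: sumr_ge0 => l _; exact: exprn_ge0.
have h2 : `|B i j| ^+ 2 = 0.
  apply: (psumr_eq0P _ h1) => // k _; exact: exprn_ge0.
by move/eqP: h2; rewrite mxE sqrf_eq0 normr_eq0 => /eqP.
Qed.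

Lemma mx_nz n (A : 'M[C]_n) : A != 0 -> exists i j, A i j != 0.
Proof.
move=> nz; case: (boolP [exists i, [exists j, A i j != 0]]).
  by move=> /existsP[i /existsP[j h]]; exists i, j.
move=> /existsPn H; case/eqP: nz; apply/matrixP=> i j.
have /existsPn/(_ j) := H i; rewrite negbK => /eqP ->; by rewrite mxE.
Qed.

Lemma delta_entry n (A B : 'M[C]_n) k l i j :
  (A *m delta_mx k l *m B) i j = A i k * B l j.
Proof.
rewrite -(mul_delta_mx (0 : 'I_1)) mulmxA -colE -mulmxA -rowE mxE big_ord1.
by rewrite !mxE.
Qed.

Lemma prim_contra n (L : 'M[C]_n -> 'M[C]_n) (Pi Pi' : 'M[C]_n) :
  Pi + Pi' = 1%:M -> Pi' *m Pi = 0 -> Pi *m Pi = Pi ->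
  adjmx Pi = Pi -> adjmx Pi' = Pi' -> Pi != 0 -> Pi' != 0 ->
  Pi' *m L Pi = 0 -> primitive L -> False.
Proof.
move=> Hsum H10 Hid aPi aPi' nzPi nzPi' HL [Ks [k [Kr Hspan]]].
have HK : forall K, K \in Ks -> Pi' *m K *m Pi = 0.
  have E0 : \sum_(K <- Ks) (Pi' *m K *m Pi) *m adjmx (Pi' *m K *m Pi) = 0.
    have -> : \sum_(K <- Ks) (Pi' *m K *m Pi) *m adjmx (Pi' *m K *m Pi)
      = Pi' *m L Pi *m Pi'.
      rewrite Kr mulmx_sumr mulmx_suml; apply: eq_bigr => K _.
      rewrite !adjmxM aPi aPi' !mulmxA; congr (_ *m _ *m _).
      by rewrite -!mulmxA Hid.
    by rewrite HL mul0mx.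
  move=> K KK; apply: tr_BB_eq0.
  have /eqP : \tr (\sum_(K <- Ks) (Pi' *m K *m Pi) *m adjmx (Pi' *m K *m Pi)) = 0.
    by rewrite E0 mxtrace0.
  rewrite raddf_sum psumr_eq0 => [/allP H|K' _]; last exact: tr_BB_ge0.
  by apply/eqP; apply: (H K KK).
have Hprod : forall w : seq 'I_(size Ks),
    Pi' *m foldr mulmx 1%:M [seq Ks`_(nat_of_ord a) | a <- w] *m Pi = 0.
  elim=> [|a w IH] /=; first by rewrite mulmx1.
  have -> : Pi' *m (Ks`_a *m foldr mulmx 1%:M [seq Ks`_(nat_of_ord a) | a <- w]) *m Pi
    = Pi' *m Ks`_a *m ((Pi + Pi') *m foldr mulmx 1%:M [seq Ks`_(nat_of_ord a) | a <- w] *m Pi).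
    by rewrite Hsum mul1mx !mulmxA.
  rewrite !mulmxDl mulmxDr IH mulmx0 addr0 !mulmxA.
  by rewrite (HK _ (mem_nth 0 (ltn_ord a))) !mul0mx.
have Hall : forall A, Pi' *m A *m Pi = 0.
  move=> A; have [c ->] := Hspan A.
  rewrite mulmx_sumr mulmx_suml big1 // => w _.
  by rewrite -scalemxAr -scalemxAl Hprod scaler0.
have [i [k0 nz1]] := mx_nz nzPi'.
have [l [j nz2]] := mx_nz nzPi.
have := Hall (delta_mx k0 l) => /matrixP /(_ i j).
rewrite delta_entry mxE => /eqP; rewrite mulf_eq0 (negPf nz1) (negPf nz2).
by [].
Qed.

End Prim.
Definition gfun (R : realType) (b t u : R) : R[i] := expi (- (t * ((- b^-1) * u))).

Lemma gfunD (R : realType) (b t u v : R) : gfun b t u * gfun b t v = gfun b t (u + v).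
Proof. by rewrite /gfun expiD !mulrDr opprD. Qed.

Lemma ptrace0 (R : realType) m n : ptrace2 (0 : 'M[R[i]]_(m * n)) = 0.
Proof. by apply/matrixP=> i j; rewrite !mxE big1 // => k _; rewrite mxE. Qed.

Lemma complexI (R : realType) (x y : R) : x%:C = y%:C -> x = y.
Proof. by case. Qed.

Lemma comm_of_conj (R : realType) n (U A : 'M[R[i]]_n) :
  adjmx U *m U = 1%:M -> U *m A *m adjmx U = A -> U *m A = A *m U.
Proof. by move=> u E; rewrite -{2}E -!mulmxA u mulmx1. Qed.

Section Main.
Variables (R : realType) (dS M : nat) (dE : 'I_M -> nat)
  (HS : 'M[R[i]]_dS) (HE : forall j, 'M[R[i]]_(dE j))
  (V : forall j, 'M[R[i]]_(dS * dE j)) (tau : 'I_M -> R) (beta : R)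
  (rhoP : R -> 'M[R[i]]_dS).
Hypotheses (sHS : selfadj HS) (sHE : forall j, selfadj (HE j))
  (sV : forall j, selfadj (V j)).
Hypothesis NE : forall (j : 'I_M) (z : R),
     Uj HS HE V tau j *m (rhoP z *t rhoE HE beta j z) *m adjmx (Uj HS HE V tau j)
     = rhoP z *t rhoE HE beta j z.

Local Notation U j := (Uj HS HE V tau j).

Lemma U_unit2 j : unit2 (U j).
Proof.
have sS : selfadj (HS *t 1%:M + 1%:M *t HE j + V j).
  by rewrite /selfadj !adjmxD !adjmx_tens !adjmx1 sHS sHE sV.
have [[Qs s] sp] := spec_exists sS.
rewrite /Uj /Uint (mxfun_dec _ sp) /=.
apply: unit2_dec; first exact: (spec_dec_unit2 sp).
by move=> i; apply: expi_conj.
Qed.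

Lemma env_comm j (P : 'M[R[i]]_dS) p (Q : 'M[R[i]]_(dE j)) h
    (F : 'I_dS -> R[i]) (G : 'I_(dE j) -> R[i]) :
  spec_dec (rhoP 0) (P, p) -> spec_dec (HE j) (Q, h) ->
  (forall a b a' b', p a * gw beta h b = p a' * gw beta h b' ->
     F a * G b = F a' * G b') ->
  U j *m ((adjmx P *m diag_mx (\row_a F a) *m P) *t (adjmx Q *m diag_mx (\row_b G b) *m Q))
  = ((adjmx P *m diag_mx (\row_a F a) *m P) *t (adjmx Q *m diag_mx (\row_b G b) *m Q)) *m U j.
Proof.
move=> spP spQ cond.
have NE0 := NE j 0.
have [uU1 uU2] := U_unit2 j.
rewrite /rhoE subr0 (gibbs_dec _ spQ) spP.2 /= dec_tens in NE0.
set A := adjmx (P *t Q) *m _ *m (P *t Q) in NE0.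
have UA : U j *m A = A *m U j by apply: comm_of_conj.
have up := unit2_tens (spec_dec_unit2 spP) (spec_dec_unit2 spQ).
rewrite dec_tens; apply: (commute_fun up up _ UA) => k k'.
rewrite -!rmorphM => /complexI.
exact: cond.
Qed.

Lemma adjmx_delta m n (a : 'I_m) (b : 'I_n) :
  adjmx (delta_mx a b : 'M[R[i]]_(m, n)) = delta_mx b a.
Proof. by apply/matrixP=> i j; rewrite !mxE rmorph_nat andbC. Qed.

Lemma diag0 n : diag_mx (\row_(i < n) (0 : R[i])) = 0.
Proof. by apply/matrixP=> i j; rewrite !mxE mul0rn. Qed.

Lemma diag_add n (d e : 'I_n -> R[i]) :
  diag_mx (\row_i d i) + diag_mx (\row_i e i) = diag_mx (\row_i (d i + e i)).
Proof. by apply/matrixP=> i j; rewrite !mxE mulrnDl. Qed.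

Lemma rho_nonneg P p : is_state (rhoP 0) -> spec_dec (rhoP 0) (P, p) -> forall a, 0 <= p a.
Proof.
move=> [_ [psdr _]] spP a.
have [u1 u2] := spec_dec_unit2 spP.
have PD : P *m rhoP 0 *m adjmx P = diag_mx (\row_i (p i)%:C).
  by rewrite {1}spP.2 /= !mulmxA u2 mul1mx -mulmxA u2 mulmx1.
have := psdr (adjmx P *m delta_mx a 0).
rewrite adjmxM adjmxK adjmx_delta.
have -> : delta_mx (0 : 'I_1) a *m P *m rhoP 0 *m (adjmx P *m delta_mx a (0 : 'I_1))
  = delta_mx (0 : 'I_1) a *m (P *m rhoP 0 *m adjmx P) *m delta_mx a (0 : 'I_1) by rewrite !mulmxA.
rewrite PD -rowE -colE !mxE eqxx mulr1n => h.
by rewrite -lecR; exact: h.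
Qed.

Hypothesis ER : (exists zeta, primitive (Lcy HS HE V tau beta zeta)) \/
   (exists zeta, primitive (Lra HS HE V tau beta zeta)).
Hypothesis st0 : is_state (rhoP 0).

Lemma rho_pos P p : spec_dec (rhoP 0) (P, p) -> forall a, 0 < p a.
Proof.
move=> spP a0; rewrite lt_def (rho_nonneg st0 spP) andbT; apply/eqP => pa0.
have uP := spec_dec_unit2 spP.
set Pi := adjmx P *m diag_mx (\row_a ((p a != 0)%:R : R[i])) *m P.
set Pi' := adjmx P *m diag_mx (\row_a ((p a == 0)%:R : R[i])) *m P.
have Hsum : Pi + Pi' = 1%:M.
  rewrite /Pi /Pi' -mulmxDl -mulmxDr diag_add.
  have -> : \row_a ((p a != 0)%:R + (p a == 0)%:R) = \row_a (1 : R[i]).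
    by apply/rowP=> a; rewrite !mxE; case: eqP; rewrite /= ?add0r ?addr0.
  by rewrite diag1 mulmx1 uP.1.
have H10 : Pi' *m Pi = 0.
  rewrite /Pi /Pi' dec_mul //.
  have -> : \row_a ((p a == 0)%:R * (p a != 0)%:R) = \row_a (0 : R[i]).
    by apply/rowP=> a; rewrite !mxE; case: eqP; rewrite ?mulr0 ?mul0r.
  by rewrite diag0 mulmx0 mul0mx.
have Hid : Pi *m Pi = Pi.
  rewrite /Pi dec_mul //; congr (_ *m diag_mx _ *m _).
  by apply/rowP=> a; rewrite !mxE; case: eqP; rewrite ?mulr0 ?mulr1.
have aPi : adjmx Pi = Pi.
  by rewrite /Pi dec_adj; congr (_ *m diag_mx _ *m _); apply/rowP=> a; rewrite !mxE rmorph_nat.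
have aPi' : adjmx Pi' = Pi'.
  by rewrite /Pi' dec_adj; congr (_ *m diag_mx _ *m _); apply/rowP=> a; rewrite !mxE rmorph_nat.
have nzPi : Pi != 0.
  apply/eqP => P0.
  have : rhoP 0 *m Pi = rhoP 0.
    rewrite /Pi spP.2 /= dec_mul //; congr (_ *m diag_mx _ *m _).
    by apply/rowP=> a; rewrite !mxE; case: eqP => [->|]; rewrite ?mulr0 ?mulr1.
  rewrite P0 mulmx0 => r0.
  by have := st0.2.2; rewrite -r0 mxtrace0 => /eqP; rewrite eq_sym oner_eq0.
have nzPi' : Pi' != 0.
  apply/eqP => P0.
  have : P *m Pi' *m adjmx P = diag_mx (\row_a ((p a == 0)%:R : R[i])).
    by rewrite /Pi' !mulmxA uP.2 mul1mx -mulmxA uP.2 mulmx1.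
  rewrite P0 mulmx0 mul0mx => /matrixP /(_ a0 a0).
  by rewrite !mxE pa0 !eqxx /= => /esym/eqP; rewrite ?mulr1n oner_eq0.
have Hpres : forall j z Y, Pi' *m Y = 0 -> Y *m Pi' = 0 ->
    Pi' *m Lj HS HE V tau beta j z Y = 0 /\ Lj HS HE V tau beta j z Y *m Pi' = 0.
  move=> j z Y HY1 HY2.
  have [[Q h] spQ] := spec_exists (sHE j).
  have uQ := spec_dec_unit2 spQ.
  have cond : forall a b a' b', p a * gw beta h b = p a' * gw beta h b' ->
      ((p a == 0)%:R : R[i]) * 1 = (p a' == 0)%:R * 1.
    move=> a b a' b' e; rewrite !mulr1.
    have : (p a * gw beta h b == 0) = (p a' * gw beta h b' == 0) by rewrite e.
    have g1 := gw_pos beta h b; have g2 := gw_pos beta h b'.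
    have E1 : (p a * gw beta h b == 0) = (p a == 0) by rewrite mulf_eq0 (gt_eqF g1) orbF.
    have E2 : (p a' * gw beta h b' == 0) = (p a' == 0) by rewrite mulf_eq0 (gt_eqF g2) orbF.
    by rewrite E1 E2 => ->.
  have cm := env_comm (F := fun a => ((p a == 0)%:R : R[i])) (G := fun _ => 1) spP spQ cond.
  rewrite diag1 mulmx1 uQ.1 -/Pi' in cm.
  have cm' : adjmx (U j) *m (Pi' *t 1%:M) = (Pi' *t 1%:M) *m adjmx (U j).
    have := congr1 (@adjmx _ _ _) cm.
    by rewrite !adjmxM adjmx_tens aPi' adjmx1 => ->.
  rewrite /Lj /Lrep; split.
    rewrite -ptrace_l !mulmxA -cm -(mulmxA (U j)) tensmx_mul HY1 mul1mx tens0mx.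
    by rewrite mulmx0 mul0mx ptrace0.
  rewrite -ptrace_r -mulmxA cm' mulmxA -(mulmxA (U j)) tensmx_mul HY2 mulmx1 tens0mx.
  by rewrite mulmx0 mul0mx ptrace0.
have HPi1 : Pi' *m Pi = 0 := H10.
have HPi2 : Pi *m Pi' = 0.
  by have := congr1 (@adjmx _ _ _) H10; rewrite adjmxM aPi aPi' adjmx0.
case: ER => [[zeta prim]|[zeta prim]].
  apply: (prim_contra Hsum H10 Hid aPi aPi' nzPi nzPi' _ prim).
  suff : forall Y, Pi' *m Y = 0 -> Y *m Pi' = 0 ->
      Pi' *m Lcy HS HE V tau beta zeta Y = 0 /\ Lcy HS HE V tau beta zeta Y *m Pi' = 0.
    by move=> /(_ Pi HPi1 HPi2) [].
  rewrite /Lcy; elim: (enum 'I_M) => [|j s IH] Y H1 H2 /=; first by split.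
  by have [h1 h2] := Hpres j (zeta j) Y H1 H2; apply: IH h1 h2.
apply: (prim_contra Hsum H10 Hid aPi aPi' nzPi nzPi' _ prim).
rewrite /Lra -scalemxAr mulmx_sumr big1 ?scaler0 // => j _.
exact: (Hpres j (zeta j) Pi HPi1 HPi2).1.
Qed.

Lemma main_sec (j : 'I_M) (z t : R) (rho : 'M[R[i]]_dS) :
  let H' := (- beta^-1)%:C *: mxfun (fun x => (ln x)%:C) (rhoP 0) in
  let W := fun t : R => mxfun (fun x => expi (- (t * x))) H' in
    Lj HS HE V tau beta j z (W t *m rho *m adjmx (W t))
    = W t *m Lj HS HE V tau beta j z rho *m adjmx (W t).
Proof.
move=> H' W.
have [[P p] spP] := spec_exists st0.1.
have ppos := rho_pos spP.
have uP := spec_dec_unit2 spP.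
have spH : spec_dec H' (P, fun a => - beta^-1 * ln (p a)).
  split; first exact: spP.1.
  rewrite /H' (mxfun_dec _ spP) scale_dec /=; congr (_ *m diag_mx _ *m _).
  by apply/rowP=> a; rewrite !mxE rmorphM.
have EW : W t = adjmx P *m diag_mx (\row_a gfun beta t (ln (p a))) *m P.
  by rewrite /W (mxfun_dec _ spH).
rewrite EW; set Wm := adjmx P *m _ *m P.
have [[Q h] spQ] := spec_exists (sHE j).
have uQ := spec_dec_unit2 spQ.
set WE := adjmx Q *m diag_mx (\row_b gfun beta t (ln (gw beta h b))) *m Q.
have cond : forall a b a' b', p a * gw beta h b = p a' * gw beta h b' ->
    gfun beta t (ln (p a)) * gfun beta t (ln (gw beta h b))
    = gfun beta t (ln (p a')) * gfun beta t (ln (gw beta h b')).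
  move=> a b a' b' e; rewrite !gfunD.
  have q1 : p a \in Num.pos by rewrite posrE.
  have q2 : p a' \in Num.pos by rewrite posrE.
  have q3 : gw beta h b \in Num.pos by rewrite posrE gw_pos.
  have q4 : gw beta h b' \in Num.pos by rewrite posrE gw_pos.
  by rewrite -(lnM q1 q3) -(lnM q2 q4) e.
have cm := env_comm (F := fun a => gfun beta t (ln (p a)))
  (G := fun b => gfun beta t (ln (gw beta h b))) spP spQ cond.
rewrite -/Wm -/WE in cm.
have cm' : adjmx (Wm *t WE) *m adjmx (U j) = adjmx (U j) *m adjmx (Wm *t WE).
  by rewrite -!adjmxM cm.
have uWE : adjmx WE *m WE = 1%:M.
  by have [] := unit2_dec (d := fun b => gfun beta t (ln (gw beta h b))) uQ (fun b => expi_conj _).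
rewrite /Lj /Lrep /rhoE (gibbs_dec _ spQ) /=.
set rz := adjmx Q *m _ *m Q.
have Hrz : WE *m rz *m adjmx WE = rz.
  rewrite /WE /rz dec_adj !dec_mul //; congr (_ *m diag_mx _ *m _).
  by apply/rowP=> b; rewrite !mxE mulrAC /gfun expi_conj' mul1r.
have Htens : (Wm *m rho *m adjmx Wm) *t rz
    = (Wm *t WE) *m (rho *t rz) *m adjmx (Wm *t WE).
  by rewrite adjmx_tens !tensmx_mul Hrz.
rewrite Htens.
have -> : U j *m ((Wm *t WE) *m (rho *t rz) *m adjmx (Wm *t WE)) *m adjmx (U j)
    = (Wm *t WE) *m (U j *m (rho *t rz) *m adjmx (U j)) *m adjmx (Wm *t WE).
  by rewrite !mulmxA cm -!mulmxA cm' !mulmxA.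
by rewrite ptrace_conj.
Qed.

End Main.
Unset Implicit Arguments.

Theorem mainTheorem10 (R : realType) (dS M : nat) (dE : 'I_M -> nat)
  (HS : 'M[R[i]]_dS) (HE : forall j, 'M[R[i]]_(dE j))
  (V : forall j, 'M[R[i]]_(dS * dE j)) (tau : 'I_M -> R) (beta : R)
  (rhoP : R -> 'M[R[i]]_dS) :
  selfadj HS -> (forall j, selfadj (HE j)) -> (forall j, selfadj (V j)) ->
  (forall j, 0 < tau j) -> 0 < beta ->
  (* (ER#) for some # in {cy, ra} *)
  ((exists zeta, primitive (Lcy HS HE V tau beta zeta)) \/
   (exists zeta, primitive (Lra HS HE V tau beta zeta))) ->
  (* (NE) *)
  (forall z, is_state (rhoP z)) ->
  (forall (j : 'I_M) (z : R),
     Uj HS HE V tau j *m (rhoP z *t rhoE HE beta j z) *m adjmx (Uj HS HE V tau j)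
     = rhoP z *t rhoE HE beta j z) ->
  let H' := (- beta^-1)%:C *: mxfun (fun x => (ln x)%:C) (rhoP 0) in
  let W := fun t : R => mxfun (fun x => expi (- (t * x))) H' in
  forall (j : 'I_M) (z t : R) (rho : 'M[R[i]]_dS),
    Lj HS HE V tau beta j z (W t *m rho *m adjmx (W t))
    = W t *m Lj HS HE V tau beta j z rho *m adjmx (W t).
Proof.
move=> sHS sHE sV _ _ ER st NE H' W j z t rho.
exact: (main_sec sHS sHE sV NE ER (st 0) j z t rho).
Qed.
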